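(* Let $(E,(\cdot,\cdot),\mathcal H)$ be an extended affine Lie algebra with root system $R$, let $\hat E=\mathcal H_R+E_c$ be as in the context and $\hat E^{iso}:=\big(\sum_{0\neq\sigma\in R^0}E_\sigma\big)\cap E_c$. The following are equivalent: (a) the restriction of $(\cdot,\cdot)$ to $\hat E$ is non-degenerate; (b) the restriction of $(\cdot,\cdot)$ to $\hat E^{iso}$ is non-degenerate; (c) $Z(E_c)\subseteq\mathcal H$.
   Context: All Lie algebras are over $\mathbb C$. An extended affine Lie algebra (EALA) is a triple $(E,(\cdot,\cdot),\mathcal H)$ where $E$ is a Lie algebra, $\mathcal H$ a subalgebra and $(\cdot,\cdot)$ a bilinear form on $E$ such that: (EA1) symmetric, non-degenerate, invariant form; (EA2) $\mathcal H$ finite-dimensional, $E=\bigoplus_{\alpha\in\mathcal H^*}E_\alpha$, $E_\alpha=\{x:[h,x]=\alpha(h)x\ \forall h\in\mathcal H\}$, $E_0=\mathcal H$; root system $R=\{\alpha:E_\alpha\neq0\}$; $t_\alpha\in\mathcal H$ given by $\alpha(h)=(h,t_\alpha)$, $(\alpha,\beta):=(t_\alpha,t_\beta)$, $R^\times=\{\alpha\in R:(\alpha,\alpha)\neq0\}$, $R^0=R\setminus R^\times$; (EA3) $\mathrm{ad}\,x$ locally nilpotent for $x\in E_\alpha$, $\alpha\in R^\times$; (EA4) $R$ discrete; (EA5) $R^\times$ connected (not a union of two nonempty mutually orthogonal subsets) and every isotropic root non-isolated. Let $\mathcal V=\mathrm{span}_{\mathbb R}R$, $\mathcal V^0=\mathrm{span}_{\mathbb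 R}R^0$; the image $\bar R$ of $R$ in $\mathcal V/\mathcal V^0$ is an irreducible finite root system, assumed reduced. The core $E_c$ is the subalgebra generated by the $E_\alpha$, $\alpha\in R^\times$, and $Z(E_c)$ is its center. Fix a finite root system $\dot R\subseteq R$ (containing $0$) with $R\subseteq\dot R+\mathcal V^0$ mapping bijectively onto $\bar R$. Put $\dot{\mathcal H}=\sum_{\dot\alpha\in\dot R}\mathbb Ct_{\dot\alpha}$, $\mathcal H_c=\sum_{\alpha\in R^\times}\mathbb Ct_\alpha$, $\mathcal H^0=\sum_{\sigma\in R^0}\mathbb Ct_\sigma$. Choose $\hat{\mathcal H}^0$ in the orthogonal complement of $\dot{\mathcal H}$ in $\mathcal H$ with $\dim\hat{\mathcal H}^0=\dim\mathcal H^0$, $(\hat{\mathcal H}^0,\hat{\mathcal H}^0)=0$ and the form non-degenerate on $\mathcal H^0\oplus\hat{\mathcal H}^0$; set $\mathcal H_R=\mathcal H_c\oplus\hat{\mathcal H}^0$ and $\hat E=\mathcal H_R+E_c$. *)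

(* Defs.v *)
From mathcomp Require Import all_boot all_algebra complex reals.
Set Implicit Arguments. Unset Strict Implicit. Unset Printing Implicit Defensive.
Import GRing.Theory Num.Theory.
Local Open Scope ring_scope.

Definition lie_bracket (K : fieldType) (E : lmodType K) (br : E -> E -> E) : Prop :=
  [/\ (forall (a : K) (x y z : E), br (a *: x + y) z = a *: br x z + br y z),
      (forall (a : K) (x y z : E), br z (a *: x + y) = a *: br z x + br z y),
      (forall x : E, br x x = 0) &
      (forall x y z : E, br x (br y z) + br y (br z x) + br z (br x y) = 0)].

Definition EA1_form (K : fieldType) (E : lmodType K) (br : E -> E -> E)
    (form : E -> E -> K) : Prop :=
  [/\ (forall (a : K) (x y z : E), form (a *: x + y) z = a * form x z + form y z),
      (forall x y : E, form x y = form y x),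
      (forall x y z : E, form (br x y) z = form x (br y z)) &
      (forall x : E, (forall y : E, form x y = 0) -> x = 0)].

Definition nondeg_on (K : fieldType) (E : lmodType K) (form : E -> E -> K)
    (S : E -> Prop) : Prop :=
  forall x, S x -> (forall y, S y -> form x y = 0) -> x = 0.

Section EALA.
Variable R : realType.
Local Notation C := (R[i]).
Variable E : lmodType C.
Variable br : E -> E -> E.
Variable form : E -> E -> C.
Variable n : nat.
(* The Cartan subalgebra H is given through a basis  h 0, ..., h (n-1);
   H^* is identified with row vectors 'rV_n via  alpha |-> (alpha (h i))_i. *)
Variable h : 'I_n -> E.

Definition hv (c : 'rV[C]_n) : E := \sum_(i < n) c 0 i *: h i.
Definition inH (x : E) : Prop := exists c : 'rV[C]_n, x = hv c.

Definition rootsp (alpha : 'rV[C]_n) (x : E) : Prop :=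
  forall i : 'I_n, br (h i) x = alpha 0 i *: x.

Definition isroot (alpha : 'rV[C]_n) : Prop := exists2 x, rootsp alpha x & x <> 0.

Definition gramH : 'M[C]_n := \matrix_(i, j) form (h i) (h j).

(* t_alpha : the element of H with alpha(x) = (x, t_alpha) for x in H
   (the form is non-degenerate on H = E_0, so gramH is invertible) *)
Definition tcoord (alpha : 'rV[C]_n) : 'rV[C]_n := alpha *m invmx gramH.
Definition tE (alpha : 'rV[C]_n) : E := hv (tcoord alpha).

Definition rform (alpha beta : 'rV[C]_n) : C := form (tE alpha) (tE beta).

Definition nonisoroot (alpha : 'rV[C]_n) : Prop := isroot alpha /\ rform alpha alpha != 0.
Definition isoroot (alpha : 'rV[C]_n) : Prop := isroot alpha /\ rform alpha alpha = 0.

Definition inV0 (v : 'rV[C]_n) : Prop :=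
  exists s : seq (R * 'rV[C]_n),
    (forall p, p \in s -> isoroot p.2) /\
    v = \sum_(p <- s) ((p.1)%:C)%C *: p.2.

Inductive inEc : E -> Prop :=
  | Ec_gen alpha x : nonisoroot alpha -> rootsp alpha x -> inEc x
  | Ec_zero : inEc 0
  | Ec_add x y : inEc x -> inEc y -> inEc (x + y)
  | Ec_scale (a : C) x : inEc x -> inEc (a *: x)
  | Ec_br x y : inEc x -> inEc y -> inEc (br x y).

Definition inZEc (x : E) : Prop := inEc x /\ (forall y, inEc y -> br x y = 0).

Definition in_tspan (P : 'rV[C]_n -> Prop) (x : E) : Prop :=
  exists s : seq (C * 'rV[C]_n),
    (forall p, p \in s -> P p.2) /\ x = \sum_(p <- s) p.1 *: tE p.2.

Definition inHc : E -> Prop := in_tspan nonisoroot.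
Definition inH0 : E -> Prop := in_tspan isoroot.

(* the extended affine Lie algebra axioms (EA1)-(EA5), together with the
   standing assumption that the finite root system \bar R is reduced *)
Definition is_EALA : Prop :=
  [/\ lie_bracket br,
      EA1_form br form,
      [/\
      (forall c : 'rV[C]_n, hv c = 0 -> c = 0),
      (forall i j, inH (br (h i) (h j))),
      (forall x : E, exists s : seq ('rV[C]_n * E),
          [/\ uniq (map fst s), (forall p, p \in s -> rootsp p.1 p.2) &
              x = \sum_(p <- s) p.2]) &
      (forall x : E, rootsp 0 x <-> inH x)] &
      [/\
          (forall alpha x y, nonisoroot alpha -> rootsp alpha x ->
              exists k : nat, iter k (br x) y = 0),
          (forall alpha, isroot alpha -> exists2 e : C, 0 < e &
              forall beta, isroot beta -> beta <> alpha ->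
                exists i : 'I_n, e <= `|beta 0 i - alpha 0 i|),
          (~ exists A B : 'rV[C]_n -> Prop,
              [/\ (forall a, nonisoroot a <-> A a \/ B a),
                  (exists a, A a), (exists b, B b) &
                  (forall a b, A a -> B b -> rform a b = 0)]),
          (forall sigma, isoroot sigma ->
              exists2 alpha, nonisoroot alpha & isroot (alpha + sigma)) &
          (* \bar R is reduced *)
          (forall alpha beta, nonisoroot alpha -> isroot beta ->
              ~ inV0 (beta - 2%:R *: alpha))]].

Definition fin_root_system (S : seq 'rV[C]_n) : Prop :=
  [/\ 0 \in S,
      (forall a, a \in S -> a != 0 -> 0 < rform a a) &
      (forall a b, a \in S -> b \in S -> b != 0 ->
         (exists k : int, 2%:R * rform a b / rform b b = k%:~R) /\
         a - (2%:R * rform a b / rform b b) *: b \in S)].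

(* \dot R : a finite root system inside R with R \subseteq \dot R + V^0,
   mapping bijectively onto \bar R *)
Definition is_dotR (Rd : seq 'rV[C]_n) : Prop :=
  [/\ fin_root_system Rd,
      (forall a, a \in Rd -> isroot a),
      (forall alpha, isroot alpha -> exists2 a, a \in Rd & inV0 (alpha - a)) &
      (forall a b, a \in Rd -> b \in Rd -> inV0 (a - b) -> a = b)].

Definition inHdot (Rd : seq 'rV[C]_n) : E -> Prop := in_tspan (fun a => a \in Rd).

Definition inHhat0 (m : nat) (Q : 'M[C]_(m, n)) (x : E) : Prop :=
  exists u : 'rV[C]_m, x = hv (u *m Q).

Definition dimH0 (d : nat) : Prop :=
  exists B : 'M[C]_(d, n),
    [/\ row_free B, (forall i, inH0 (hv (row i B))) &
        (forall x, inH0 x -> exists u : 'rV[C]_d, x = hv (u *m B))].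

Definition is_hatH0 (Rd : seq 'rV[C]_n) (m : nat) (Q : 'M[C]_(m, n)) : Prop :=
  [/\ (forall x y, inHhat0 Q x -> inHdot Rd y -> form x y = 0),
      dimH0 (\rank Q),
      (forall x y, inHhat0 Q x -> inHhat0 Q y -> form x y = 0),
      (forall x, inHhat0 Q x -> inH0 x -> x = 0) &
      nondeg_on form (fun x => exists y z, [/\ inH0 y, inHhat0 Q z & x = y + z])].

(* \hat E = H_R + E_c,  H_R = H_c (+) \hat H^0 *)
Definition inEhat (m : nat) (Q : 'M[C]_(m, n)) (x : E) : Prop :=
  exists a b c, [/\ inHc a, inHhat0 Q b, inEc c & x = a + b + c].

Definition inEiso (x : E) : Prop :=
  inEc x /\
  exists s : seq ('rV[C]_n * E),
    (forall p, p \in s -> [/\ isoroot p.1, p.1 != 0 & rootsp p.1 p.2]) /\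
    x = \sum_(p <- s) p.2.

End EALA.

(* Main.v *)
Require Import Defs.
From mathcomp Require Import all_boot all_algebra complex reals.
From mathcomp Require Import boolp ring zify.
Set Implicit Arguments. Unset Strict Implicit. Unset Printing Implicit Defensive.
Import GRing.Theory Num.Theory.
Local Open Scope ring_scope.


Section Wavg.
Variable K : numFieldType.
Variable V : lmodType K.
Variable rf : V -> V -> K.
Hypothesis rfDl : forall a x y z, rf (a *: x + y) z = a * rf x z + rf y z.
Hypothesis rfsym : forall x y, rf x y = rf y x.
Variable S : seq V.
Hypothesis Snz : forall b, b \in S -> b != 0 -> rf b b != 0.
Hypothesis Srefl : forall a b, a \in S -> b \in S -> b != 0 ->
  a - (2%:R * rf a b / rf b b) *: b \in S.
Variable mu : V -> K.
Hypothesis muDl : forall a x y, mu (a *: x + y) = a * mu x + mu y.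

Lemma rf0l' z : rf 0 z = 0.
Proof. have H := rfDl 1 0 0 z; rewrite scale1r addr0 mul1r in H. by apply: (addrI (rf 0 z)); rewrite addr0 -H. Qed.
Lemma rfZl' a x z : rf (a *: x) z = a * rf x z.
Proof. by rewrite -[a *: x]addr0 rfDl rf0l' addr0. Qed.
Lemma rfD1' x y z : rf (x + y) z = rf x z + rf y z.
Proof. by have := rfDl 1 x y z; rewrite scale1r mul1r. Qed.
Lemma mu0 : mu 0 = 0.
Proof. have H := muDl 1 0 0; rewrite scale1r addr0 mul1r in H. by apply: (addrI (mu 0)); rewrite addr0 -H. Qed.
Lemma muZ a x : mu (a *: x) = a * mu x.
Proof. by rewrite -[a *: x]addr0 muDl mu0 addr0. Qed.
Lemma muD x y : mu (x + y) = mu x + mu y.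
Proof. by have := muDl 1 x y; rewrite scale1r mul1r. Qed.

Definition refl b x := x - (2%:R * rf x b / rf b b) *: b.
Definition goodw (w : seq V) := all (fun b => (b \in S) && (b != 0)) w.
Definition act (w : seq V) x := foldr refl x w.
Definition valt w := map (fun a => mu (act w a)) S.
Definition realized t := exists w, goodw w /\ valt w = t.

Lemma refl_lin b a x y : refl b (a *: x + y) = a *: refl b x + refl b y.
Proof.
rewrite /refl rfDl scalerBr scalerA addrACA -opprD -scalerDl.
by congr (_ - _ *: _); ring.
Qed.
Lemma refl_add b x y : refl b (x + y) = refl b x + refl b y.
Proof. by have := refl_lin b 1 x y; rewrite !scale1r. Qed.
Lemma refl_scale b a x : refl b (a *: x) = a *: refl b x.
Proof. by rewrite -[a *: x]addr0 refl_lin {2}/refl rf0l' mulr0 mul0r scale0r subr0 addr0. Qed.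

Lemma act_add w x y : act w (x + y) = act w x + act w y.
Proof. by elim: w => //= b w IH; rewrite IH refl_add. Qed.
Lemma act_scale w a x : act w (a *: x) = a *: act w x.
Proof. by elim: w => //= b w IH; rewrite IH refl_scale. Qed.

Lemma act_S w a : goodw w -> a \in S -> act w a \in S.
Proof.
elim: w => //= b w IH /andP [/andP [Hb Hb0] Hw] Ha.
by apply: Srefl => //; apply: IH.
Qed.

Lemma refl_invol b x : b \in S -> b != 0 -> refl b (refl b x) = x.
Proof.
move=> Hb Hb0; have Hk := Snz Hb Hb0.
have Hr : rf (refl b x) b = - rf x b.
  rewrite /refl -[x - _]/(x + - _) rfD1' -scaleNr rfZl'.
  by field.
rewrite {1}/refl Hr /refl -addrA -opprD -scalerDl.
by rewrite mulrN mulNr addrN scale0r oppr0 addr0.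
Qed.

Lemma refl_fix b r : rf r b = 0 -> refl b r = r.
Proof. by move=> H; rewrite /refl H mulr0 mul0r scale0r subr0. Qed.

Lemma act_fix w r : (forall b, b \in S -> rf r b = 0) -> goodw w -> act w r = r.
Proof.
move=> Hr; elim: w => //= b w IH /andP [/andP [Hb _] Hw].
by rewrite IH // refl_fix // Hr.
Qed.

Definition inspan x := exists s : seq (K * V), (forall p, p \in s -> p.2 \in S) /\
  x = \sum_(p <- s) p.1 *: p.2.

Lemma mu_act_span x : inspan x -> exists s : seq (K * V), (forall p, p \in s -> p.2 \in S) /\
  forall w', mu (act w' x) = \sum_(p <- s) p.1 * mu (act w' p.2).
Proof.
case=> s [Hs ->]; exists s; split=> // w'.
elim: s {Hs} => [|p s IH].
  rewrite !big_nil; have -> : act w' 0 = 0 by rewrite -(scale0r 0 : (0 : K) *: (0 : V) = 0) act_scale !scale0r.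
  exact: mu0.
by rewrite !big_cons act_add muD IH act_scale muZ.
Qed.

Lemma act_eq_span w w' x : valt w = valt w' -> inspan x -> mu (act w x) = mu (act w' x).
Proof.
move=> Hv Hx; have [s [Hs Heq]] := mu_act_span Hx; rewrite !Heq.
apply: eq_big_seq => p Hp; congr (_ * _).
by move/eq_in_map: Hv; apply; apply: Hs.
Qed.

Definition Phi b (t : seq K) := map (fun a => nth 0 t (index (refl b a) S)) S.

Lemma valt_snoc w b : goodw w -> b \in S -> b != 0 -> valt (w ++ [:: b]) = Phi b (valt w).
Proof.
move=> Hw Hb Hb0; rewrite /valt /Phi; apply/eq_in_map => a Ha.
rewrite /act foldr_cat /= (nth_map 0) ?index_mem; last by apply: Srefl.
by rewrite nth_index //; apply: Srefl.
Qed.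

Lemma goodw_snoc w b : goodw w -> b \in S -> b != 0 -> goodw (w ++ [:: b]).
Proof. by move=> Hw Hb Hb0; rewrite /goodw all_cat -/(goodw w) Hw /= Hb Hb0. Qed.

Lemma Phi_invol b t : b \in S -> b != 0 -> realized t -> Phi b (Phi b t) = t.
Proof.
move=> Hb Hb0 [w [Hw <-]].
rewrite -valt_snoc // -valt_snoc ?goodw_snoc //.
rewrite /valt; apply/eq_in_map => a Ha.
by rewrite /act -catA foldr_cat /= refl_invol.
Qed.

Lemma Phi_real b t : b \in S -> b != 0 -> realized t -> realized (Phi b t).
Proof.
move=> Hb Hb0 [w [Hw <-]]; exists (w ++ [:: b]); split; first exact: goodw_snoc.
exact: valt_snoc.
Qed.

Fixpoint allseqs (L : seq K) k : seq (seq K) :=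
  if k is k'.+1 then [seq x :: t | x <- L, t <- allseqs L k'] else [:: [::]].

Lemma mem_allseqs L t : all (fun x => x \in L) t -> t \in allseqs L (size t).
Proof.
elim: t => [|x t IH] /=; first by rewrite inE.
by case/andP=> Hx Ht; apply/allpairsP; exists (x, t); split=> //; apply: IH.
Qed.

Definition Orb := undup (filter (fun t => `[< realized t >]) (allseqs (map mu S) (size S))).

Lemma mem_Orb t : (t \in Orb) <-> realized t.
Proof.
rewrite mem_undup mem_filter; split; first by case/andP => /asboolP.
move=> Ht; apply/andP; split; first exact/asboolP.
case: Ht => w [Hw <-]; have -> : size S = size (valt w) by rewrite size_map.
apply: mem_allseqs; apply/allP => x /mapP [a Ha ->]; apply: map_f.
exact: act_S.
Qed.

Definition Wd t : seq V :=
  match pselect (realized t) with left H => proj1_sig (cid H) | right _ => [::] end.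

Lemma Wd_spec t : realized t -> goodw (Wd t) /\ valt (Wd t) = t.
Proof.
move=> Ht; rewrite /Wd; case: pselect => // H.
by case: (cid H) => w /=.
Qed.

Definition psi x := \sum_(t <- Orb) mu (act (Wd t) x).

Lemma psi_lin a x y : psi (a *: x + y) = a * psi x + psi y.
Proof.
rewrite /psi mulr_sumr -big_split; apply: eq_bigr => t _.
by rewrite act_add act_scale muD muZ.
Qed.

Lemma psi_refl b x : b \in S -> b != 0 -> inspan x -> psi (refl b x) = psi x.
Proof.
move=> Hb Hb0 Hx; rewrite /psi.
have Hperm : perm_eq (map (Phi b) Orb) Orb.
  apply: uniq_perm; [|exact: undup_uniq|].
    rewrite map_inj_in_uniq ?undup_uniq // => t1 t2 /mem_Orb H1 /mem_Orb H2 H.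
    by rewrite -(Phi_invol Hb Hb0 H1) H Phi_invol.
  move=> t; apply/mapP/idP => [[t' /mem_Orb Ht' ->]|Ht].
    by apply/mem_Orb; apply: Phi_real.
  exists (Phi b t); first by apply/mem_Orb; apply/Phi_real => //; apply/mem_Orb.
  by rewrite Phi_invol //; apply/mem_Orb.
have Hp2 : perm_eq Orb (map (Phi b) Orb) by rewrite perm_sym.
rewrite [RHS](perm_big _ Hp2) big_map.
apply: eq_big_seq => t /mem_Orb Ht.
have [Hw Hv] := Wd_spec Ht.
have Hr := Phi_real Hb Hb0 Ht.
have [Hw' Hv'] := Wd_spec Hr.
have -> : act (Wd t) (refl b x) = act (Wd t ++ [:: b]) x by rewrite /act foldr_cat.
apply: act_eq_span => //.
by rewrite valt_snoc // Hv Hv'.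
Qed.

Lemma inspan_S b : b \in S -> inspan b.
Proof.
by move=> Hb; exists [:: (1, b)]; split; [move=> p; rewrite inE => /eqP -> | rewrite big_cons big_nil addr0 scale1r].
Qed.

Lemma psi0 : psi 0 = 0.
Proof. have H := psi_lin 1 0 0; rewrite scale1r addr0 mul1r in H. by apply: (addrI (psi 0)); rewrite addr0 -H. Qed.
Lemma psiN x : psi (- x) = - psi x.
Proof. by have := psi_lin (-1) x 0; rewrite addr0 psi0 addr0 scaleN1r mulN1r. Qed.

Lemma psi_S b : b \in S -> psi b = 0.
Proof.
move=> Hb; case: (eqVneq b 0) => [->|Hb0]; first exact: psi0.
have Hk := Snz Hb Hb0.
have : psi (refl b b) = psi b by apply: psi_refl => //; apply: inspan_S.
rewrite /refl mulfK // scaler_nat mulr2n opprD addrA subrr add0r psiN.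
move/eqP; rewrite eq_sym -subr_eq0 opprK -mulr2n -mulr_natl mulf_eq0 pnatr_eq0 /=.
by move/eqP.
Qed.

Lemma psi_span u : inspan u -> psi u = 0.
Proof.
case=> s [Hs ->]; elim: s Hs => [|p s IH] Hs; first by rewrite big_nil psi0.
rewrite big_cons psi_lin psi_S ?mulr0 ?add0r; last by apply: Hs; apply: mem_head.
by apply: IH => q Hq; apply: Hs; rewrite inE Hq orbT.
Qed.

Lemma sum_const_seq (T : Type) (s : seq T) (c : K) : \sum_(t <- s) c = c *+ size s.
Proof. by elim: s => [|x s IH]; rewrite ?big_nil ?big_cons ?IH ?mulrS. Qed.

Lemma W_main u : inspan u -> (forall b, b \in S -> rf u b = 0) -> mu u = 0.
Proof.
move=> Hu Hr.
have H1 : psi u = mu u *+ size Orb.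
  rewrite /psi -sum_const_seq; apply: eq_big_seq => t /mem_Orb Ht.
  by have [Hw _] := Wd_spec Ht; rewrite act_fix.
have Hsz : (0 < size Orb)%N.
  have : valt [::] \in Orb by apply/mem_Orb; exists [::].
  by case: Orb.
move: (psi_span Hu); rewrite H1 => /eqP; rewrite -mulr_natr mulf_eq0 pnatr_eq0.
by case/orP => /eqP // Hs; rewrite Hs in Hsz.
Qed.

End Wavg.

Section A.
Variable R : realType.
Local Notation C := (R[i]).
Variables (E : lmodType C) (br : E -> E -> E) (form : E -> E -> C) (n : nat) (h : 'I_n -> E).
Hypothesis HE : is_EALA br form h.

Local Notation RS := (rootsp br h).
Local Notation rf := (rform form h).
Local Notation G := (gramH form h).

Lemma Hlie : lie_bracket br. Proof. by case: HE. Qed.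
Lemma Hform : EA1_form br form. Proof. by case: HE. Qed.

Lemma brDl a x y z : br (a *: x + y) z = a *: br x z + br y z.
Proof. by case: Hlie. Qed.
Lemma brDr a x y z : br z (a *: x + y) = a *: br z x + br z y.
Proof. by case: Hlie. Qed.
Lemma brxx x : br x x = 0. Proof. by case: Hlie. Qed.
Lemma jac x y z : br x (br y z) + br y (br z x) + br z (br x y) = 0.
Proof. by case: Hlie. Qed.

Lemma br0l z : br 0 z = 0.
Proof. have H := brDl 1 0 0 z; rewrite !scale1r addr0 in H. by apply: (addrI (br 0 z)); rewrite addr0 -H. Qed.
Lemma br0r z : br z 0 = 0.
Proof. have H := brDr 1 0 0 z; rewrite !scale1r addr0 in H. by apply: (addrI (br z 0)); rewrite addr0 -H. Qed.
Lemma brDl1 x y z : br (x + y) z = br x z + br y z.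
Proof. by have := brDl 1 x y z; rewrite !scale1r. Qed.
Lemma brDr1 x y z : br z (x + y) = br z x + br z y.
Proof. by have := brDr 1 x y z; rewrite !scale1r. Qed.
Lemma brZl a x z : br (a *: x) z = a *: br x z.
Proof. by rewrite -[a *: x]addr0 brDl br0l addr0. Qed.
Lemma brZr a x z : br z (a *: x) = a *: br z x.
Proof. by rewrite -[a *: x]addr0 brDr br0r addr0. Qed.
Lemma brNl x z : br (- x) z = - br x z.
Proof. by rewrite -scaleN1r brZl scaleN1r. Qed.
Lemma brNr x z : br z (- x) = - br z x.
Proof. by rewrite -scaleN1r brZr scaleN1r. Qed.
Lemma brBl x y z : br (x - y) z = br x z - br y z.
Proof. by rewrite brDl1 brNl. Qed.
Lemma brBr x y z : br z (x - y) = br z x - br z y.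
Proof. by rewrite brDr1 brNr. Qed.
Lemma brA x y : br x y = - br y x.
Proof.
have := brxx (x + y); rewrite brDl1 !brDr1 !brxx add0r addr0 => /eqP.
by rewrite addr_eq0 => /eqP.
Qed.
Lemma jac' x y z : br x (br y z) = br (br x y) z + br y (br x z).
Proof.
rewrite (brA (br x y) z) (brA x z) brNr -[LHS]subr0 -(jac x y z).
by rewrite !opprD !addrA addrN add0r addrC.
Qed.

Lemma fDl a x y z : form (a *: x + y) z = a * form x z + form y z.
Proof. by case: Hform. Qed.
Lemma fsym x y : form x y = form y x. Proof. by case: Hform. Qed.
Lemma finv x y z : form (br x y) z = form x (br y z). Proof. by case: Hform. Qed.
Lemma fnd x : (forall y, form x y = 0) -> x = 0. Proof. by case: Hform => _ _ _; apply. Qed.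

Lemma f0l z : form 0 z = 0.
Proof. have H := fDl 1 0 0 z; rewrite scale1r addr0 mul1r in H. by apply: (addrI (form 0 z)); rewrite addr0 -H. Qed.
Lemma f0r z : form z 0 = 0. Proof. by rewrite fsym f0l. Qed.
Lemma fDl1 x y z : form (x + y) z = form x z + form y z.
Proof. by have := fDl 1 x y z; rewrite scale1r mul1r. Qed.
Lemma fZl a x z : form (a *: x) z = a * form x z.
Proof. by rewrite -[a *: x]addr0 fDl f0l addr0. Qed.
Lemma fNl x z : form (- x) z = - form x z.
Proof. by rewrite -scaleN1r fZl mulN1r. Qed.
Lemma fBl x y z : form (x - y) z = form x z - form y z.
Proof. by rewrite fDl1 fNl. Qed.
Lemma fDr1 x y z : form z (x + y) = form z x + form z y.
Proof. by rewrite fsym fDl1 !(fsym z). Qed.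
Lemma fZr a x z : form z (a *: x) = a * form z x.
Proof. by rewrite fsym fZl fsym. Qed.
Lemma fNr x z : form z (- x) = - form z x.
Proof. by rewrite fsym fNl fsym. Qed.
Lemma fBr x y z : form z (x - y) = form z x - form z y.
Proof. by rewrite fDr1 fNr. Qed.

Lemma f_suml (I : Type) (s : seq I) (F : I -> E) z :
  form (\sum_(i <- s) F i) z = \sum_(i <- s) form (F i) z.
Proof. by elim: s => [|p s IH]; rewrite ?big_nil ?f0l // !big_cons fDl1 IH. Qed.
Lemma f_sumr (I : Type) (s : seq I) (F : I -> E) z :
  form z (\sum_(i <- s) F i) = \sum_(i <- s) form z (F i).
Proof. by elim: s => [|p s IH]; rewrite ?big_nil ?f0r // !big_cons fDr1 IH. Qed.
Lemma br_suml (I : Type) (s : seq I) (F : I -> E) z :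
  br (\sum_(i <- s) F i) z = \sum_(i <- s) br (F i) z.
Proof. by elim: s => [|p s IH]; rewrite ?big_nil ?br0l // !big_cons brDl1 IH. Qed.
Lemma br_sumr (I : Type) (s : seq I) (F : I -> E) z :
  br z (\sum_(i <- s) F i) = \sum_(i <- s) br z (F i).
Proof. by elim: s => [|p s IH]; rewrite ?big_nil ?br0r // !big_cons brDr1 IH. Qed.

Lemma hv_inj c : hv h c = 0 -> c = 0.
Proof. by case: HE => _ _ [] + _ _ _ _; apply. Qed.
Lemma Hdec x : exists s : seq ('rV[C]_n * E),
  [/\ uniq (map fst s), (forall p, p \in s -> RS p.1 p.2) & x = \sum_(p <- s) p.2].
Proof. by case: HE => _ _ [] _ _ + _ _. Qed.
Lemma H0iff x : RS 0 x <-> inH h x.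
Proof. by case: HE => _ _ [] _ _ _ + _. Qed.
Lemma EA3 alpha x y : nonisoroot br form h alpha -> RS alpha x ->
  exists k : nat, iter k (br x) y = 0.
Proof. by case: HE => _ _ _ [] + _ _ _ _; apply. Qed.
Lemma EA5iso sigma : isoroot br form h sigma ->
  exists2 alpha, nonisoroot br form h alpha & isroot br h (alpha + sigma).
Proof. by case: HE => _ _ _ [] _ _ _ + _; apply. Qed.
Lemma Hred alpha beta : nonisoroot br form h alpha -> isroot br h beta ->
  ~ inV0 br form h (beta - 2%:R *: alpha).
Proof. by case: HE => _ _ _ [] _ _ _ _; apply. Qed.

Lemma hvD c d : hv h (c + d) = hv h c + hv h d.
Proof. by rewrite /hv -big_split; apply: eq_bigr => i _; rewrite mxE scalerDl. Qed.
Lemma hvZ a c : hv h (a *: c) = a *: hv h c.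
Proof. by rewrite /hv scaler_sumr; apply: eq_bigr => i _; rewrite mxE scalerA. Qed.
Lemma hv0 : hv h 0 = 0.
Proof. by rewrite /hv big1 // => i _; rewrite mxE scale0r. Qed.

Lemma RS_add a x y : RS a x -> RS a y -> RS a (x + y).
Proof. by move=> Hx Hy i; rewrite brDr1 Hx Hy scalerDr. Qed.
Lemma RS_scale a c x : RS a x -> RS a (c *: x).
Proof. by move=> Hx i; rewrite brZr Hx !scalerA mulrC. Qed.
Lemma RS_0 a : RS a 0.
Proof. by move=> i; rewrite br0r scaler0. Qed.
Lemma RS_opp a x : RS a x -> RS a (- x).
Proof. by move=> Hx; rewrite -scaleN1r; apply: RS_scale. Qed.
Lemma RS_sub a x y : RS a x -> RS a y -> RS a (x - y).
Proof. by move=> Hx Hy; apply: RS_add => //; apply: RS_opp. Qed.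
Lemma RS_sum (I : eqType) (s : seq I) (F : I -> E) a :
  (forall i, i \in s -> RS a (F i)) -> RS a (\sum_(i <- s) F i).
Proof.
elim: s => [|p s IH] H; rewrite ?big_nil ?big_cons; first exact: RS_0.
apply: RS_add; first by apply: H; rewrite inE eqxx.
by apply: IH => i Hi; apply: H; rewrite inE Hi orbT.
Qed.
Lemma RS_br a b x y : RS a x -> RS b y -> RS (a + b) (br x y).
Proof. by move=> Hx Hy i; rewrite jac' Hx Hy brZl brZr mxE scalerDl. Qed.

Lemma inH_h i : inH h (h i).
Proof.
exists (\row_j ((j == i)%:R)); rewrite /hv (bigD1 i) //= big1 ?mxE ?eqxx ?scale1r ?addr0 //.
by move=> j /negbTE Hj; rewrite mxE Hj scale0r.
Qed.
Lemma RS0_h i : RS 0 (h i). Proof. exact/H0iff/inH_h. Qed.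
Lemma RS0_hv c : RS 0 (hv h c). Proof. by apply/H0iff; exists c. Qed.

Definition ev (b c : 'rV[C]_n) : C := \sum_i c 0 i * b 0 i.

Lemma br_hv b c y : RS b y -> br (hv h c) y = ev b c *: y.
Proof.
move=> Hy; rewrite /hv br_suml /ev scaler_suml; apply: eq_bigr => i _.
by rewrite brZl Hy scalerA.
Qed.
Lemma br_hh c d : br (hv h c) (hv h d) = 0.
Proof. by rewrite (br_hv _ (RS0_hv d)) /ev big1 ?scale0r // => i _; rewrite mxE mulr0. Qed.

Lemma nz_coord (v : 'rV[C]_n) : v != 0 -> exists i, v 0 i != 0.
Proof.
move=> Hv; case: (boolP [exists i, v 0 i != 0]) => [/existsP//|/existsPn H].
case/eqP: Hv; apply/rowP => j; rewrite mxE; move: (H j); by rewrite negbK => /eqP.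
Qed.

Lemma orth a b x y : RS a x -> RS b y -> a + b != 0 -> form x y = 0.
Proof.
move=> Hx Hy Hab; have [ i ] := nz_coord Hab; rewrite mxE => Hi.
have : (a 0 i + b 0 i) * form x y = 0.
  rewrite mulrDl.
  have : form (br (h i) x) y = - form x (br (h i) y) by rewrite brA fNl finv.
  by rewrite Hx Hy fZl fZr => ->; rewrite addNr.
by move/eqP; rewrite mulf_eq0 (negbTE Hi) /= => /eqP.
Qed.

Lemma perp x : (forall b y, RS b y -> form x y = 0) -> x = 0.
Proof.
move=> Hp; apply: fnd => w; have [s [_ Hs ->]] := Hdec w.
by rewrite f_sumr big_seq big1 // => p Hp'; apply: Hp (Hs _ Hp').
Qed.

Lemma pair_exists a e : RS a e -> e != 0 -> exists f, RS (- a) f /\ form e f != 0.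
Proof.
move=> He Hne; case: (EM (exists f, RS (- a) f /\ form e f != 0)) => // Hn.
case/eqP: Hne; apply: perp => b y Hy.
case: (eqVneq b (- a)) => [Hb|Hb].
  subst b; case: (eqVneq (form e y) 0) => // Hf; exfalso; apply: Hn; by exists y.
apply: (orth He Hy); apply: contra Hb => /eqP Hab; apply/eqP.
by rewrite -[b]add0r -(addNr a) -addrA Hab addr0.
Qed.

Lemma formH c d : form (hv h c) (hv h d) = \sum_i \sum_j c 0 i * d 0 j * G i j.
Proof.
rewrite /hv f_suml; apply: eq_bigr => i _; rewrite fZl f_sumr mulr_sumr.
by apply: eq_bigr => j _; rewrite fZr /gramH mxE mulrA.
Qed.

Lemma formHm c d : form (hv h c) (hv h d) = (c *m G *m d^T) 0 0.
Proof.
rewrite formH mxE; under [RHS]eq_bigr do rewrite !mxE mulr_suml.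
rewrite exchange_big; apply: eq_bigr => i _; apply: eq_bigr => j _.
by rewrite mulrAC.
Qed.

Lemma Gunit : G \in unitmx.
Proof.
rewrite -row_free_unit; apply: inj_row_free => v Hv.
apply: hv_inj; apply: perp => b y Hy.
case: (eqVneq b 0) => [Hb0|Hb0].
  subst b; have [d ->] := (H0iff y).1 Hy.
  by rewrite formHm Hv mul0mx mxE.
by apply: (orth (RS0_hv v) Hy); rewrite add0r.
Qed.

Lemma tE_hv b c : form (tE form h b) (hv h c) = ev b c.
Proof.
rewrite /tE /tcoord formHm mulmxKV ?Gunit // mxE /ev.
by apply: eq_bigr => i _; rewrite mxE mulrC.
Qed.

Lemma tcoord_lin a x y : tcoord form h (a *: x + y) = a *: tcoord form h x + tcoord form h y.
Proof. by rewrite /tcoord mulmxDl scalemxAl. Qed.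
Lemma tE_lin a x y : tE form h (a *: x + y) = a *: tE form h x + tE form h y.
Proof. by rewrite /tE tcoord_lin hvD hvZ. Qed.
Lemma tE0 : tE form h 0 = 0.
Proof. by rewrite /tE /tcoord mul0mx hv0. Qed.
Lemma tED x y : tE form h (x + y) = tE form h x + tE form h y.
Proof. by have := tE_lin 1 x y; rewrite !scale1r. Qed.
Lemma tEZ a x : tE form h (a *: x) = a *: tE form h x.
Proof. by rewrite -[a *: x]addr0 tE_lin tE0 addr0. Qed.
Lemma tEN x : tE form h (- x) = - tE form h x.
Proof. by rewrite -[- x]scaleN1r tEZ scaleN1r. Qed.
Lemma tEB x y : tE form h (x - y) = tE form h x - tE form h y.
Proof. by rewrite tED tEN. Qed.
Lemma tE_sum (I : Type) (s : seq I) (F : I -> 'rV[C]_n) :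
  tE form h (\sum_(i <- s) F i) = \sum_(i <- s) tE form h (F i).
Proof. by elim: s => [|p s IH]; rewrite ?big_nil ?tE0 // !big_cons tED IH. Qed.

Lemma rf_ev a b : rf a b = ev b (tcoord form h a).
Proof. by rewrite /rform fsym -tE_hv. Qed.
Lemma rf_sym a b : rf a b = rf b a.
Proof. by rewrite /rform fsym. Qed.
Lemma ev_lin a x y c : ev (a *: x + y) c = a * ev x c + ev y c.
Proof.
rewrite /ev mulr_sumr -big_split; apply: eq_bigr => i _.
by rewrite !mxE mulrDr mulrCA.
Qed.
Lemma rfDl a x y z : rf (a *: x + y) z = a * rf x z + rf y z.
Proof. by rewrite rf_sym rf_ev ev_lin -!rf_ev !(rf_sym z). Qed.
Lemma rfDr a x y z : rf z (a *: x + y) = a * rf z x + rf z y.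
Proof. by rewrite rf_sym rfDl !(rf_sym _ z). Qed.
Lemma rf0l z : rf 0 z = 0. Proof. by rewrite /rform tE0 f0l. Qed.
Lemma rf0r z : rf z 0 = 0. Proof. by rewrite /rform tE0 f0r. Qed.
Lemma rfD1l x y z : rf (x + y) z = rf x z + rf y z.
Proof. by have := rfDl 1 x y z; rewrite scale1r mul1r. Qed.
Lemma rfZl a x z : rf (a *: x) z = a * rf x z.
Proof. by rewrite -[a *: x]addr0 rfDl rf0l addr0. Qed.
Lemma rfNl x z : rf (- x) z = - rf x z.
Proof. by rewrite -scaleN1r rfZl mulN1r. Qed.
Lemma rfD1r x y z : rf z (x + y) = rf z x + rf z y.
Proof. by rewrite rf_sym rfD1l !(rf_sym _ z). Qed.
Lemma rfZr a x z : rf z (a *: x) = a * rf z x.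
Proof. by rewrite rf_sym rfZl rf_sym. Qed.
Lemma rfNr x z : rf z (- x) = - rf z x.
Proof. by rewrite rf_sym rfNl rf_sym. Qed.
Lemma rfNN x : rf (- x) (- x) = rf x x.
Proof. by rewrite rfNl rfNr opprK. Qed.

Lemma br_tE a b y : RS b y -> br (tE form h a) y = rf a b *: y.
Proof. by move=> Hy; rewrite /tE (br_hv _ Hy) rf_ev. Qed.
Lemma RS0_tE a : RS 0 (tE form h a). Proof. exact: RS0_hv. Qed.

Lemma br_pair a e f : RS a e -> RS (- a) f -> br e f = form e f *: tE form h a.
Proof.
move=> He Hf; apply/eqP; rewrite -subr_eq0; apply/eqP; apply: perp => b y Hy.
have H0 : RS 0 (br e f - form e f *: tE form h a).
  apply: RS_sub; last by apply: RS_scale; apply: RS0_tE.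
  by have := RS_br He Hf; rewrite addrN.
case: (eqVneq b 0) => [Hb0|Hb0]; last by apply: (orth H0 Hy); rewrite add0r.
subst b; have [c ->] := (H0iff y).1 Hy.
rewrite fBl fZl tE_hv finv brA (br_hv _ Hf) fNr fZr.
rewrite /ev.
have -> : \sum_i c 0 i * (- a) 0 i = - \sum_i c 0 i * a 0 i.
  by rewrite -sumrN; apply: eq_bigr => i _; rewrite mxE mulrN.
by rewrite mulNr opprK mulrC subrr.
Qed.

Lemma RS_iter a b e y k : RS a e -> RS b y -> RS (b + a *+ k) (iter k (br e) y).
Proof.
move=> He Hy; elim: k => [|k IH] /=; first by rewrite mulr0n addr0.
by rewrite mulrS addrCA; apply: RS_br.
Qed.

Lemma sl2_chain e f hh v0 lam :
  br hh e = 2%:R *: e -> br hh f = - (2%:R *: f) -> br e f = hh ->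
  br e v0 = 0 -> br hh v0 = lam *: v0 ->
  forall k, br hh (iter k (br f) v0) = (lam - 2%:R * k%:R) *: iter k (br f) v0 /\
    br e (iter k.+1 (br f) v0) = (k.+1%:R * (lam - k%:R)) *: iter k (br f) v0.
Proof.
move=> Hhe Hhf Hef He0 Hh0; elim=> [|k [IH1 IH2]] /=.
  split; first by rewrite mulr0 subr0.
  by rewrite jac' Hef He0 br0r addr0 Hh0 mul1r subr0.
set vk := iter k (br f) v0.
have H1 : br hh (br f vk) = (lam - 2%:R * k.+1%:R) *: br f vk.
  rewrite jac' Hhf IH1 brZr brNl brZl -scaleNr -scalerDl.
  by congr (_ *: _); rewrite -addn1 natrD; ring.
split=> //.
rewrite jac' Hef H1 IH2 brZr -scalerDl; congr (_ *: _).
by rewrite -[k.+2]addn2 -[k.+1]addn1 !natrD; ring.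
Qed.

Lemma sl2_main e f hh v mu :
  br hh e = 2%:R *: e -> br hh f = - (2%:R *: f) -> br e f = hh ->
  (forall y, exists k, iter k (br e) y = 0) ->
  (forall y, exists k, iter k (br f) y = 0) ->
  v != 0 -> br hh v = mu *: v ->
  exists p q : nat, mu = q%:R - 2%:R * p%:R /\
    forall k, (k <= q)%N -> iter k (br f) (iter p (br e) v) != 0.
Proof.
move=> Hhe Hhf Hef Ne Nf Hv Hhv.
have hiter : forall j, br hh (iter j (br e) v) = (mu + 2%:R * j%:R) *: iter j (br e) v.
  elim=> [|j IH] /=; first by rewrite mulr0 addr0.
  rewrite jac' Hhe IH brZl brZr -scalerDl; congr (_ *: _).
  by rewrite -addn1 natrD; ring.
have Hex : exists k, iter k (br e) v == 0 by have [k Hk] := Ne v; exists k; apply/eqP.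
case: (ex_minnP Hex) => N0 /eqP HN0 Hmin0.
have N0pos : (0 < N0)%N.
  by case: N0 HN0 {Hmin0} => //= HN0; rewrite HN0 eqxx in Hv.
set p := N0.-1; set v0 := iter p (br e) v.
have Hv0 : v0 != 0.
  apply/negP => /eqP H; have := Hmin0 p; rewrite /v0 in H; rewrite H eqxx => /(_ isT).
  by rewrite /p; case: (N0) N0pos => //= m _; rewrite ltnn.
have He0 : br e v0 = 0 by rewrite /v0 /p -iterS prednK.
have Hex1 : exists k, iter k (br f) v0 == 0 by have [k Hk] := Nf v0; exists k; apply/eqP.
case: (ex_minnP Hex1) => N1 /eqP HN1 Hmin1.
have N1pos : (0 < N1)%N.
  by case: N1 HN1 {Hmin1} => //= HN1; rewrite HN1 eqxx in Hv0.
set q := N1.-1.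
have Hnz : forall k, (k <= q)%N -> iter k (br f) v0 != 0.
  move=> k Hk; apply/negP => /eqP H; have := Hmin1 k; rewrite H eqxx => /(_ isT).
  by rewrite leqNgt -(prednK N1pos) ltnS Hk.
have [_ Hc] := sl2_chain Hhe Hhf Hef He0 (hiter p) q.
rewrite /q prednK // HN1 br0r in Hc.
move/esym/eqP: Hc; rewrite scaler_eq0 (negbTE (Hnz q (leqnn q))) orbF mulf_eq0.
rewrite pnatr_eq0 /= subr_eq0 => /orP [/eqP HN|/eqP Hlam].
  by rewrite HN in N1pos.
exists p, q; split=> //; rewrite /q -Hlam; ring.
Qed.

Lemma rowlin (x a : 'rV[C]_n) p j : x + a *+ p + (- a) *+ j = x + (p%:R - j%:R) *: a.
Proof. by rewrite mulNrn -(scaler_nat p a) -(scaler_nat j a) -addrA -scalerBl. Qed.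

Lemma orth_key sig al (m : R) :
  isoroot br form h sig -> nonisoroot br form h al ->
  2%:R / rf al al * rf al sig = (m%:C)%C ->
  (exists w, RS (sig - (m%:C)%C *: al) w /\ w != 0) -> rf sig al = 0.
Proof.
move=> [Hsr Hs0] [Har Hk] Hm [w [Hw Hwne]].
set k := rf al al in Hk Hm.
set M := (m%:C)%C in Hm Hw.
have Hr : rf al sig = M * k / 2%:R by rewrite -Hm; field.
case: (eqVneq m 0) => [Hm0|Hm0].
  rewrite rf_sym Hr /M Hm0 rmorph0; ring.
exfalso; apply: (Hred (conj Har Hk) Har).
have Hiso' : isoroot br form h (sig - M *: al).
  split; first by exists w => //; apply/eqP.
  by rewrite rfD1l !rfD1r !rfNl !rfNr !rfZl !rfZr Hs0 -/k (rf_sym sig al) Hr; field.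
pose L : seq (R * 'rV[C]_n) := [:: (- 1 / m, sig); (1 / m, sig - M *: al)].
exists L; split.
  by move=> p; rewrite !inE => /orP [/eqP ->|/eqP ->].
rewrite big_cons big_cons big_nil addr0 /= scalerBr scalerA /M -rmorphM.
rewrite divfK // rmorph1 scale1r mulNr rmorphN scaleNr addrA addNr add0r.
by rewrite -[X in X - _ = _]scale1r -scalerBl -scaleN1r; congr (_ *: _); ring.
Qed.

Lemma rowlin' (x a : 'rV[C]_n) p j : x + (- a) *+ p + a *+ j = x + (j%:R - p%:R) *: a.
Proof. by rewrite mulNrn -(scaler_nat p a) -(scaler_nat j a) scalerBl addrA addrAC. Qed.

Lemma orthO sig al : isoroot br form h sig -> nonisoroot br form h al -> rf sig al = 0.
Proof.
move=> Hsig Hal; have Hal' := Hal; have Hsig' := Hsig.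
case: Hsig' => [[v Hv /eqP Hvne] Hs0]; case: Hal' => [[e He /eqP Hne] Hk].
set k := rf al al in Hk.
have [f' [Hf' Hef]] := pair_exists He Hne.
have Hbr := br_pair He Hf'.
set hh := (2%:R / k) *: tE form h al.
set f := (2%:R / (k * form e f')) *: f'.
have Hhe : br hh e = 2%:R *: e by rewrite /hh brZl (br_tE _ He) scalerA divfK.
have Hf : RS (- al) f by apply: RS_scale.
have Hhf : br hh f = - (2%:R *: f).
  by rewrite /hh brZl (br_tE _ Hf) rfNr scalerA -/k mulrN divfK // scaleNr.
have Hef2 : br e f = hh.
  rewrite /f brZr Hbr scalerA /hh.
  by rewrite invfM mulrA mulfVK.
have Nf' : f' != 0 by apply: contraNneq Hef => ->; rewrite f0r.
have Nnf : nonisoroot br form h (- al) by split; [exists f' => //; apply/eqP | rewrite rfNN].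
have Ne : forall y, exists j, iter j (br e) y = 0 by move=> y; apply: (EA3 _ Hal He).
have Nf : forall y, exists j, iter j (br f) y = 0 by move=> y; apply: (EA3 _ Nnf Hf).
have Hhv : br hh v = (2%:R / k * rf al sig) *: v by rewrite /hh brZl (br_tE _ Hv) scalerA.
have [p [q [Hmu Hnz]]] := sl2_main Hhe Hhf Hef2 Ne Nf Hvne Hhv.
case: (leqP p q) => Hpq.
  apply: (orth_key (m := q%:R - 2%:R * p%:R) Hsig Hal).
    by rewrite Hmu rmorphB rmorphM !rmorph_nat.
  exists (iter (q - p) (br f) (iter p (br e) v)); split; last by apply: Hnz; rewrite leq_subr.
  have := RS_iter (q - p) Hf (RS_iter p He Hv).
  rewrite rowlin rmorphB rmorphM !rmorph_nat natrB //.
  have -> : p%:R - (q%:R - p%:R) = - (q%:R - 2%:R * p%:R :> C) by ring.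
  by rewrite scaleNr.
have Hhe' : br (- hh) f = 2%:R *: f by rewrite brNl Hhf opprK.
have Hhf' : br (- hh) e = - (2%:R *: e) by rewrite brNl Hhe.
have Hfe : br f e = - hh by rewrite brA Hef2.
have Hhv' : br (- hh) v = (- (2%:R / k * rf al sig)) *: v by rewrite brNl Hhv scaleNr.
have [p' [q' [Hmu' Hnz']]] := sl2_main Hhe' Hhf' Hfe Nf Ne Hvne Hhv'.
have Hpq' : (p' <= q')%N.
  have : (q%:R - 2%:R * p%:R) + (q'%:R - 2%:R * p'%:R) = 0 :> C.
    by rewrite -Hmu -Hmu' subrr.
  move/eqP; rewrite addrACA -opprD subr_eq0 -mulrDr -!natrD -natrM eqr_nat => /eqP Hqq.
  lia.
apply: (orth_key (m := 2%:R * p'%:R - q'%:R) Hsig Hal).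
  rewrite rmorphB rmorphM !rmorph_nat -[LHS]opprK Hmu'; ring.
exists (iter (q' - p') (br e) (iter p' (br f) v)); split; last by apply: Hnz'; rewrite leq_subr.
have := RS_iter (q' - p') He (RS_iter p' Hf Hv).
rewrite rowlin' rmorphB rmorphM !rmorph_nat natrB //.
have -> : (q'%:R - p'%:R) - p'%:R = - (2%:R * p'%:R - q'%:R :> C) by ring.
by rewrite scaleNr.
Qed.

Local Notation Ec := (inEc br form h).

Lemma noniso_nz a : nonisoroot br form h a -> a != 0.
Proof. by case=> _ Hk; apply: contraNneq Hk => ->; rewrite rf0l. Qed.

Lemma V0_diff s1 s2 al : isoroot br form h s1 -> isoroot br form h s2 ->
  nonisoroot br form h al -> al = s1 - s2 -> False.
Proof.
move=> H1 H2 Hal Heq; have [Har _] := Hal; apply: (Hred Hal Har).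
pose L : seq (R * 'rV[C]_n) := [:: (-1, s1); (1, s2)].
exists L; split.
  by move=> p; rewrite !inE => /orP [/eqP ->|/eqP ->].
rewrite big_cons big_cons big_nil /= rmorphN rmorph1 scaleN1r scale1r addr0.
rewrite Heq scaler_nat mulr2n opprD addrA subrr add0r opprB addrC.
by [].
Qed.

Lemma gen_br b a u x : RS b u -> nonisoroot br form h a -> RS a x -> Ec (br u x).
Proof.
move=> Hu Ha Hx.
case: (eqVneq (br u x) 0) => [->|Hnz]; first exact: Ec_zero.
have Hbx := RS_br Hu Hx.
have Hr : isroot br h (b + a) by exists (br u x) => //; apply/eqP.
case: (eqVneq (rf (b + a) (b + a)) 0) => Hiso; last exact: (Ec_gen (conj Hr Hiso) Hbx).
have Hune : u != 0 by apply: contraNneq Hnz => ->; rewrite br0l.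
have Hrb : isroot br h b by exists u => //; apply/eqP.
case: (eqVneq (rf b b) 0) => Hb.
  exfalso; apply: (V0_diff (conj Hr Hiso) (conj Hrb Hb) Ha).
  by rewrite [b + a]addrC addrK.
apply: Ec_br; first exact: (Ec_gen (conj Hrb Hb) Hu).
exact: (Ec_gen Ha Hx).
Qed.

Lemma Ec_opp x : Ec x -> Ec (- x).
Proof. by move=> Hx; rewrite -scaleN1r; apply: Ec_scale. Qed.
Lemma Ec_sub x y : Ec x -> Ec y -> Ec (x - y).
Proof. by move=> Hx Hy; apply: Ec_add => //; apply: Ec_opp. Qed.

Lemma ideal y0 : Ec y0 -> forall w, Ec (br w y0).
Proof.
elim=> [a x Ha Hx||x y _ IHx _ IHy|c x _ IHx|x y Hx IHx Hy IHy] w.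
- have [s [_ Hs ->]] := Hdec w; rewrite br_suml big_seq.
  apply: (big_ind Ec); [exact: Ec_zero | by move=> ? ? ? ?; apply: Ec_add |].
  by move=> p Hp; apply: (gen_br (Hs p Hp) Ha Hx).
- by rewrite br0r; apply: Ec_zero.
- by rewrite brDr1; apply: Ec_add.
- by rewrite brZr; apply: Ec_scale.
- by rewrite jac'; apply: Ec_add; apply: Ec_br.
Qed.

Lemma ideal_l y w : Ec y -> Ec (br y w).
Proof. by move=> Hy; rewrite brA; apply/Ec_opp/ideal. Qed.

Lemma ZperpEc z y : inZEc br form h z -> Ec y -> form z y = 0.
Proof.
case=> Hz Hc; elim=> [a x Ha Hx||x y' _ IHx _ IHy|c x _ IHx|x y' Hx IHx Hy IHy].
- have [ i ] := nz_coord (noniso_nz Ha).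
  have H1 : form z (br (h i) x) = a 0 i * form z x by rewrite Hx fZr.
  have H2 : form z (br (h i) x) = 0.
    by rewrite brA fNr -finv (Hc x (Ec_gen Ha Hx)) f0l oppr0.
  move: H1; rewrite H2 => /esym/eqP; rewrite mulf_eq0 => /orP [/eqP ->|/eqP //].
  by rewrite eqxx.
- by rewrite f0r.
- by rewrite fDr1 IHx IHy addr0.
- by rewrite fZr IHx mulr0.
- by rewrite -finv (Hc x Hx) f0l.
Qed.

Lemma rad_central x : Ec x -> (forall y, Ec y -> form x y = 0) -> inZEc br form h x.
Proof.
move=> Hx Hrad; split=> // y Hy; apply: fnd => w.
by rewrite finv; apply: Hrad; apply: ideal_l.
Qed.

Section PL.
Variable P : E -> Prop.
Hypothesis Psub : forall x y, P x -> P y -> P (x - y).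
Hypothesis Pscale : forall c x, P x -> P (c *: x).
Hypothesis Pbr : forall i x, P x -> P (br (h i) x).

Lemma zaux (a b c s t : E) : (a + (c + s)) - (b + (c + t)) = (a - b) + (s - t).
Proof. by rewrite (addrCA a) [c + (a + s)]addrC (addrCA b) addrKA opprD addrACA. Qed.

Lemma PL_inner (s : seq ('rV[C]_n * E)) a0 v0 :
  (forall p, p \in s -> RS p.1 p.2 /\ p.1 != a0) -> RS a0 v0 ->
  P (v0 + \sum_(p <- s) p.2) -> P v0.
Proof.
move Hn: (size s) => k; elim: k s a0 v0 Hn => [|k IH] [|[b v] s] a0 v0 //= Hn Hs Hv0 HP;
  try by rewrite big_nil addr0 in HP.
move: Hn => [Hn].
have [Hv Hba] := Hs (b, v) (mem_head _ _).
have Hs' : forall p, p \in s -> RS p.1 p.2 /\ p.1 != a0.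
  by move=> p Hp; apply: Hs; rewrite inE Hp orbT.
have [ i ] : exists i, (a0 - b) 0 i != 0 by apply: nz_coord; rewrite subr_eq0 eq_sym.
rewrite !mxE => Hi.
pose s' := map (fun p : 'rV[C]_n * E => (p.1, (p.1 0 i - b 0 i) *: p.2)) s.
have HP' : P ((a0 0 i - b 0 i) *: v0 + \sum_(p <- s') p.2).
  set y := v0 + \sum_(p <- (b, v) :: s) p.2 in HP.
  have -> : (a0 0 i - b 0 i) *: v0 + \sum_(p <- s') p.2 = br (h i) y - b 0 i *: y.
    rewrite /y big_cons /= !brDr1 br_sumr Hv0 Hv !scalerDr.
    rewrite [X in _ = _ + (_ + X) - _](eq_big_seq (fun p : 'rV[C]_n * E => p.1 0 i *: p.2)); last first.
      by move=> p Hp; have [Hp1 _] := Hs' p Hp; rewrite Hp1.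
    rewrite zaux scalerBl; congr (_ + _).
    rewrite big_map scaler_sumr -sumrB; apply: eq_bigr => p _ /=.
    by rewrite scalerBl.
  by apply: Psub; [apply: Pbr | apply: Pscale].
have : P ((a0 0 i - b 0 i) *: v0).
  apply: (IH s' a0 _ _ _ _ HP'); [by rewrite size_map | | by apply: RS_scale].
  move=> p /mapP [q Hq ->] /=; have [Hq1 Hq2] := Hs' q Hq; split=> //.
  exact: RS_scale.
move/(Pscale (a0 0 i - b 0 i)^-1); by rewrite scalerA mulVf ?scale1r.
Qed.

Lemma PL_comp x : P x -> exists s : seq ('rV[C]_n * E),
  [/\ uniq (map fst s), (forall p, p \in s -> RS p.1 p.2 /\ P p.2) & x = \sum_(p <- s) p.2].
Proof.
move=> Hx; have [s [Hu Hs Hxs]] := Hdec x; exists s; split=> //.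
suff H : forall p, p \in s -> P p.2 by move=> p Hp; split; [apply: Hs | apply: H].
rewrite Hxs in Hx; clear Hxs.
elim: s Hu Hs Hx => [//|q s IH] /= /andP [Hq Hu] Hs Hx.
have Hs' : forall p, p \in s -> RS p.1 p.2 by move=> p Hp; apply: Hs; rewrite inE Hp orbT.
rewrite big_cons in Hx.
have HPq : P q.2.
  apply: (PL_inner (a0 := q.1) _ _ Hx); last by apply: Hs; apply: mem_head.
  move=> p Hp; split; first exact: Hs'.
  by apply: contraNneq Hq => <-; apply: map_f.
move=> p; rewrite inE => /orP [/eqP -> //|Hp].
apply: IH => //.
by have := Psub Hx HPq; rewrite addrC addKr.
Qed.
End PL.

Lemma P_Ec : [/\ forall x y, Ec x -> Ec y -> Ec (x - y),
  forall c x, Ec x -> Ec (c *: x) & forall i x, Ec x -> Ec (br (h i) x)].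
Proof. split; [exact: Ec_sub | exact: Ec_scale | by move=> i x Hx; apply: ideal]. Qed.

Lemma P_Z : [/\ forall x y, inZEc br form h x -> inZEc br form h y -> inZEc br form h (x - y),
  forall c x, inZEc br form h x -> inZEc br form h (c *: x) &
  forall i x, inZEc br form h x -> inZEc br form h (br (h i) x)].
Proof.
split.
- move=> x y [Hx Hcx] [Hy Hcy]; split; first exact: Ec_sub.
  by move=> w Hw; rewrite brBl Hcx // Hcy // subrr.
- move=> c x [Hx Hcx]; split; first exact: Ec_scale.
  by move=> w Hw; rewrite brZl Hcx // scaler0.
- move=> i x [Hx Hcx]; split; first exact: ideal.
  move=> w Hw; have := jac' (h i) x w.
  rewrite (Hcx w Hw) br0r (Hcx _ (ideal Hw (h i))) addr0 => /esym //.
Qed.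

Lemma P_zero : [/\ forall x y : E, x = 0 -> y = 0 -> x - y = 0,
  forall c (x : E), x = 0 -> c *: x = 0 & forall i (x : E), x = 0 -> br (h i) x = 0].
Proof. by split=> [x y -> ->|c x ->|i x ->]; rewrite ?subrr ?scaler0 ?br0r. Qed.

Lemma Zcomp_H : (forall a v, a != 0 -> RS a v -> inZEc br form h v -> v = 0) ->
  forall z, inZEc br form h z -> inH h z.
Proof.
move=> Hyp z Hz; have [Psub Pscale Pbr] := P_Z.
have [s [_ Hs ->]] := PL_comp Psub Pscale Pbr Hz.
apply/H0iff; apply: RS_sum => p Hp; have [Hr HZ] := Hs p Hp.
case: (eqVneq p.1 0) => H0; first by move: Hr; rewrite H0.
by rewrite (Hyp _ _ H0 Hr HZ); apply: RS_0.
Qed.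

Lemma tspan_RS0 P x : in_tspan form h P x -> RS 0 x.
Proof.
case=> s [_ ->]; apply: RS_sum => p _; apply: RS_scale; exact: RS0_tE.
Qed.

Lemma Ehat_0c m (Q : 'M[C]_(m, n)) v : Ec v -> inEhat br form h Q v.
Proof.
move=> Hv; exists 0, 0, v; split=> //; last by rewrite !add0r.
  by exists [::]; split=> //; rewrite big_nil.
by exists 0; rewrite mul0mx hv0.
Qed.

Lemma AtoC m (Q : 'M[C]_(m, n)) : nondeg_on form (inEhat br form h Q) ->
  forall x, inZEc br form h x -> inH h x.
Proof.
move=> HA; apply: Zcomp_H => a v Ha Hv HZ.
apply: HA; first by apply: Ehat_0c; case: HZ.
move=> y [a' [b' [c' [Ha' [u ->] Hc' ->]]]].
rewrite !fDr1 (ZperpEc HZ Hc') addr0.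
rewrite (orth Hv (tspan_RS0 Ha')) ?addr0 ?add0r //.
by rewrite (orth Hv (RS0_hv _)) ?addr0.
Qed.

Lemma BtoC : nondeg_on form (inEiso br form h) ->
  forall x, inZEc br form h x -> inH h x.
Proof.
move=> HB; apply: Zcomp_H => a v Ha Hv HZ.
case: (eqVneq v 0) => [//|Hvne].
have Hr : isroot br h a by exists v => //; apply/eqP.
case: (eqVneq (rf a a) 0) => Hiso.
  apply: HB.
    split; first by case: HZ.
    exists [:: (a, v)]; split; last by rewrite big_cons big_nil addr0.
    by move=> p; rewrite inE => /eqP -> /=.
  by move=> y [Hy _]; apply: ZperpEc.
apply: perp => b y Hy.
case: (eqVneq (a + b) 0) => Hab; last exact: (orth Hv Hy Hab).
case: (eqVneq y 0) => [->|Hyne]; first by rewrite f0r.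
have Hb : b = - a by apply/eqP; rewrite -addr_eq0 addrC Hab.
apply: (ZperpEc HZ); apply: (Ec_gen (alpha := b)) => //; split.
  by exists y => //; apply/eqP.
by rewrite Hb rfNN.
Qed.

Lemma CtoB : (forall x, inZEc br form h x -> inH h x) -> nondeg_on form (inEiso br form h).
Proof.
move=> HC x Hxi Hrad; have Hxi' := Hxi; case: Hxi' => Hx [s [Hs Hxs]].
have Hperp : forall y, Ec y -> form x y = 0.
  move=> y Hy; have [Psub Pscale Pbr] := P_Ec.
  have [s2 [_ Hs2 ->]] := PL_comp Psub Pscale Pbr Hy.
  rewrite f_sumr big_seq big1 // => q Hq; have [Hq1 Hq2] := Hs2 q Hq.
  case: (eqVneq q.2 0) => [->|Hqne]; first by rewrite f0r.
  have Hqr : isroot br h q.1 by exists q.2 => //; apply/eqP.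
  case: (boolP ((q.1 != 0) && (rf q.1 q.1 == 0))) => Hc.
    apply: Hrad; split=> //; exists [:: q]; split; last by rewrite big_cons big_nil addr0.
    move=> p; rewrite inE => /eqP -> ; case/andP: Hc => Hc1 /eqP Hc2.
    by split=> //; split.
  rewrite Hxs f_suml big_seq big1 // => p Hp; have [[_ Hp0] Hpne Hpr] := Hs p Hp.
  apply: (orth Hpr Hq1); apply: contra Hc => Hpq.
  have -> : q.1 = - p.1 by apply/eqP; rewrite -addr_eq0 addrC.
  by rewrite rfNN Hp0 eqxx oppr_eq0 Hpne.
have HZ := rad_central Hx Hperp.
have H0x := (H0iff x).2 (HC x HZ).
have [Psub Pscale Pbr] := P_zero.
apply/eqP; rewrite -oppr_eq0; apply/eqP.
apply: (PL_inner Psub Pscale Pbr (s := s) (a0 := 0)).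
- by move=> p Hp; have [_ Hpne Hpr] := Hs p Hp.
- exact: RS_opp.
- by rewrite -Hxs addNr.
Qed.

Section Tspan.
Variable P : 'rV[C]_n -> Prop.
Lemma ts_0 : in_tspan form h P 0.
Proof. by exists [::]; split=> //; rewrite big_nil. Qed.
Lemma ts_add x y : in_tspan form h P x -> in_tspan form h P y -> in_tspan form h P (x + y).
Proof.
case=> s1 [H1 ->] [s2 [H2 ->]]; exists (s1 ++ s2); split; last by rewrite big_cat.
by move=> p; rewrite mem_cat => /orP [/H1|/H2].
Qed.
Lemma ts_scale c x : in_tspan form h P x -> in_tspan form h P (c *: x).
Proof.
case=> s [Hs ->]; exists (map (fun p : C * 'rV[C]_n => (c * p.1, p.2)) s); split.
  by move=> p /mapP [q Hq ->]; exact: (Hs q Hq).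
by rewrite big_map scaler_sumr; apply: eq_bigr => p _; rewrite scalerA.
Qed.
Lemma ts_opp x : in_tspan form h P x -> in_tspan form h P (- x).
Proof. by move=> Hx; rewrite -scaleN1r; apply: ts_scale. Qed.
Lemma ts_gen a : P a -> in_tspan form h P (tE form h a).
Proof.
by move=> Ha; exists [:: (1, a)]; split; [move=> p; rewrite inE => /eqP -> | rewrite big_cons big_nil addr0 scale1r].
Qed.
Lemma ts_ind (Q : E -> Prop) x : Q 0 -> (forall x y, Q x -> Q y -> Q (x + y)) ->
  (forall c a, P a -> Q (c *: tE form h a)) -> in_tspan form h P x -> Q x.
Proof.
move=> Q0 QD QG [s [Hs ->]]; rewrite big_seq; apply: (big_ind Q) => // p Hp.
exact: QG (Hs p Hp).
Qed.
End Tspan.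

Lemma ts_mono (P1 P2 : 'rV[C]_n -> Prop) x :
  (forall a, P1 a -> in_tspan form h P2 (tE form h a)) ->
  in_tspan form h P1 x -> in_tspan form h P2 x.
Proof.
move=> H; apply: ts_ind; [exact: ts_0 | exact: ts_add | move=> c a Ha; apply: ts_scale; exact: H].
Qed.

Lemma iso_shift sig : isoroot br form h sig ->
  exists2 al, nonisoroot br form h al & nonisoroot br form h (al + sig).
Proof.
move=> Hs; have [al Hal Hr] := EA5iso Hs; exists al => //; split=> //.
have [_ Hk] := Hal; have [_ Hs0] := Hs.
by rewrite rfD1l !rfD1r Hs0 (rf_sym al sig) (orthO Hs Hal) !addr0.
Qed.

Lemma tiso_Hc sig : isoroot br form h sig -> inHc br form h (tE form h sig).
Proof.
move=> Hs; have [al Hal Hal'] := iso_shift Hs.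
have -> : tE form h sig = tE form h (al + sig) - tE form h al by rewrite tED addrC addKr.
by apply: ts_add; [apply: ts_gen | apply/ts_opp/ts_gen].
Qed.

Lemma H0_Hc x : inH0 br form h x -> inHc br form h x.
Proof. by apply: ts_mono => a Ha; apply: tiso_Hc. Qed.

Lemma brpair_Hc b u w : RS b u -> RS (- b) w -> inHc br form h (br u w).
Proof.
move=> Hu Hw; rewrite (br_pair Hu Hw).
case: (eqVneq u 0) => [->|Hune]; first by rewrite f0l scale0r; apply: ts_0.
have Hr : isroot br h b by exists u => //; apply/eqP.
apply: ts_scale; case: (eqVneq (rf b b) 0) => Hb.
  by apply: tiso_Hc.
by apply: ts_gen.
Qed.

Lemma RD c : Ec c -> exists s : seq ('rV[C]_n * E),
  (forall p, p \in s -> [/\ RS p.1 p.2, Ec p.2 & (p.1 = 0 -> inHc br form h p.2)]) /\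
  c = \sum_(p <- s) p.2.
Proof.
elim=> [a x Ha Hx||x y _ [s1 [H1 ->]] _ [s2 [H2 ->]]|c' x _ [s [Hs ->]]|x y _ [s1 [H1 ->]] _ [s2 [H2 ->]]].
- exists [:: (a, x)]; split; last by rewrite big_cons big_nil addr0.
  move=> p; rewrite inE => /eqP -> /=; split=> //; first exact: (Ec_gen Ha).
  by move=> Ha0; move: (noniso_nz Ha); rewrite Ha0 eqxx.
- by exists [::]; split; last by rewrite big_nil.
- exists (s1 ++ s2); split; last by rewrite big_cat.
  by move=> p; rewrite mem_cat => /orP [/H1|/H2].
- exists (map (fun p : 'rV[C]_n * E => (p.1, c' *: p.2)) s); split.
    move=> p /mapP [q Hq ->] /=; have [Hq1 Hq2 Hq3] := Hs q Hq; split.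
    + exact: RS_scale.
    + exact: Ec_scale.
    + by move=> /Hq3; apply: ts_scale.
  by rewrite big_map scaler_sumr.
- exists [seq (p.1 + q.1, br p.2 q.2) | p <- s1, q <- s2]; split.
    move=> r /allpairsP [[p q] [Hp Hq ->]] /=.
    have [Hp1 Hp2 _] := H1 p Hp; have [Hq1 Hq2 _] := H2 q Hq; split.
    + exact: RS_br.
    + exact: Ec_br.
    + move=> /eqP Hpq; have Hq1e : q.1 = - p.1 by apply/eqP; rewrite -addr_eq0 addrC.
      by rewrite Hq1e in Hq1; apply: (brpair_Hc Hp1 Hq1).
  rewrite big_allpairs_dep /= br_suml; apply: eq_bigr => p _.
  by rewrite br_sumr.
Qed.

Section Dot.
Variable Rd : seq 'rV[C]_n.
Variables (m : nat) (Q : 'M[C]_(m, n)).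
Hypothesis HD : is_dotR br form h Rd.
Hypothesis HQ : is_hatH0 br form h Rd Q.

Local Notation hat := (inHhat0 h Q).

Lemma V0_H0 v : inV0 br form h v -> inH0 br form h (tE form h v).
Proof.
case=> s [Hs ->]; rewrite tE_sum big_seq; apply: (big_ind (inH0 br form h)).
- exact: ts_0.
- by move=> ? ? ? ?; apply: ts_add.
- by move=> p Hp; rewrite tEZ; apply/ts_scale/ts_gen/Hs.
Qed.

Lemma Hdot_Hc x : inHdot form h Rd x -> inHc br form h x.
Proof.
case: HD => [[HR0 Hpos Hrefl] HRroot HRdec HRinj].
apply: ts_mono => a Ha; case: (eqVneq a 0) => [->|Hne]; first by rewrite tE0; apply: ts_0.
apply: ts_gen; split; first exact: HRroot.
exact: lt0r_neq0 (Hpos a Ha Hne).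
Qed.

Lemma Hc_split t : inHc br form h t -> exists td t0,
  [/\ inHdot form h Rd td, inH0 br form h t0 & t = td + t0].
Proof.
case: HD => [_ _ HRdec _] Ht.
apply: (ts_ind (Q := fun t => exists td t0, [/\ inHdot form h Rd td, inH0 br form h t0 & t = td + t0])) Ht.
- by exists 0, 0; split; [apply: ts_0 | apply: ts_0 | rewrite addr0].
- move=> x y [td1 [t01 [H1 H2 ->]]] [td2 [t02 [H3 H4 ->]]].
  exists (td1 + td2), (t01 + t02); split; [exact: ts_add | exact: ts_add | by rewrite addrACA].
- move=> c a [Har Hk]; have [d Hd Hv] := HRdec a Har.
  exists (c *: tE form h d), (c *: tE form h (a - d)); split.
  + by apply/ts_scale/ts_gen.
  + by apply/ts_scale/V0_H0.
  + by rewrite -scalerDr -tED addrC subrK.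
Qed.

Lemma O_H0_Hc s t : inH0 br form h s -> inHc br form h t -> form s t = 0.
Proof.
move=> Hs Ht; apply: (ts_ind (Q := fun s => form s t = 0)) Hs.
- exact: f0l.
- by move=> x y Hx Hy; rewrite fDl1 Hx Hy addr0.
- move=> c sig Hsig; rewrite fZl; apply: (ts_ind (Q := fun t => c * form (tE form h sig) t = 0)) Ht.
  + by rewrite f0r mulr0.
  + by move=> x y Hx Hy; rewrite fDr1 mulrDr Hx Hy addr0.
  + move=> d al Hal; rewrite fZr.
    by have := orthO Hsig Hal; rewrite /rform => ->; rewrite !mulr0.
Qed.

Lemma N_dot td : inHdot form h Rd td ->
  (forall t', inHdot form h Rd t' -> form td t' = 0) -> td = 0.
Proof.
case: HD => [[HR0 Hpos Hrefl] HRroot _ _] Htd Hperp.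
case: Htd => s [Hs Htd].
pose u := \sum_(p <- s) p.1 *: p.2.
have Htdu : td = tE form h u by rewrite Htd /u tE_sum; apply: eq_bigr => p _; rewrite tEZ.
have Hsnz : forall b, b \in Rd -> b != 0 -> rf b b != 0.
  by move=> b Hb Hb0; apply: lt0r_neq0; apply: Hpos.
have Hsr : forall a b, a \in Rd -> b \in Rd -> b != 0 ->
    a - (2%:R * rf a b / rf b b) *: b \in Rd.
  by move=> a b Ha Hb Hb0; have [_ ->] := Hrefl a b Ha Hb Hb0.
have Hu : inspan Rd u by exists s.
have Hr : forall b, b \in Rd -> rf u b = 0.
  by move=> b Hb; rewrite /rform -Htdu; apply: Hperp; apply: ts_gen.
have Hu0 : u = 0.
  apply/rowP => i; rewrite mxE.
  apply: (W_main (rf := rf) rfDl Hsnz Hsr (mu := fun x => x 0 i)) => //.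
  by move=> a x y; rewrite !mxE.
by rewrite Htdu Hu0 tE0.
Qed.

Lemma hat0 : hat 0.
Proof. by exists 0; rewrite mul0mx hv0. Qed.

Lemma radH t b : inHc br form h t -> hat b ->
  (forall t', inHc br form h t' -> form (t + b) t' = 0) ->
  (forall b', hat b' -> form (t + b) b' = 0) -> t + b = 0.
Proof.
case: HQ => [HQ1 _ HQ3 _ HQ5] Ht Hb Hr1 Hr2.
have [td [t0 [Htd Ht0 Htt]]] := Hc_split Ht.
rewrite Htt in Hr1 Hr2 *.
have Ftdb : forall b', hat b' -> form td b' = 0 by move=> b' Hb'; rewrite fsym; apply: HQ1.
have Fsc : forall X s, inHc br form h X -> inH0 br form h s -> form X s = 0.
  by move=> X s HX Hs; rewrite fsym; apply: O_H0_Hc.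
have Hbs : forall s, inH0 br form h s -> form b s = 0.
  move=> s Hs; have := Hr1 s (H0_Hc Hs).
  by rewrite !fDl1 (Fsc td s (Hdot_Hc Htd) Hs) (Fsc t0 s (H0_Hc Ht0) Hs) !add0r.
have Ht0b : forall b', hat b' -> form t0 b' = 0.
  move=> b' Hb'; have := Hr2 b' Hb'.
  by rewrite !fDl1 (Ftdb b' Hb') (HQ3 b b' Hb Hb') add0r addr0.
have Hb0 : b = 0.
  apply: HQ5; first by exists 0, b; split=> //; [apply: ts_0 | rewrite add0r].
  move=> y [s [z [Hs Hz ->]]]; rewrite fDr1 Hbs // (HQ3 b z Hb Hz) addr0 //.
have Ht00 : t0 = 0.
  apply: HQ5; first by exists t0, 0; split=> //; [apply: hat0 | rewrite addr0].
  move=> y [s [z [Hs Hz ->]]]; rewrite fDr1 (Fsc t0 s (H0_Hc Ht0) Hs) Ht0b // addr0 //.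
rewrite Hb0 Ht00 !addr0; apply: N_dot => // t' Ht'.
by have := Hr1 t' (Hdot_Hc Ht'); rewrite Hb0 Ht00 !addr0.
Qed.

Lemma perp0 z (s : seq ('rV[C]_n * E)) : RS 0 z -> (forall p, p \in s -> RS p.1 p.2) ->
  form z (\sum_(p <- s | p.1 != 0) p.2) = 0.
Proof.
move=> Hz Hs; rewrite -big_filter f_sumr big_seq big1 // => p; rewrite mem_filter => /andP [Hp0 Hp].
by apply: (orth Hz (Hs p Hp)); rewrite add0r.
Qed.

Lemma CtoA : (forall x, inZEc br form h x -> inH h x) -> nondeg_on form (inEhat br form h Q).
Proof.
move=> HC x [a [b [c [Ha Hb Hc ->]]]] Hrad.
have [s [Hs Hcs]] := RD Hc.
have HsRS : forall p, p \in s -> RS p.1 p.2 by move=> p Hp; have [] := Hs p Hp.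
set N := \sum_(p <- s | p.1 != 0) p.2.
set c0 := \sum_(p <- s | p.1 == 0) p.2.
have Hsplit : c = c0 + N by rewrite Hcs (bigID (fun p => p.1 == 0)).
have Hc0 : inHc br form h c0.
  rewrite /c0 big_seq_cond; apply: (big_ind (inHc br form h)).
  - exact: ts_0.
  - by move=> ? ? ? ?; apply: ts_add.
  - by move=> p /andP [Hp /eqP Hp0]; have [_ _ H] := Hs p Hp; apply: H.
have HNEc : Ec N.
  rewrite /N big_seq_cond; apply: (big_ind Ec).
  - exact: Ec_zero.
  - by move=> ? ? ? ?; apply: Ec_add.
  - by move=> p /andP [Hp _]; have [_ H _] := Hs p Hp.
have HbRS : RS 0 b by case: Hb => u ->; apply: RS0_hv.
have HNperp : forall y, Ec y -> form N y = 0.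
  move=> y Hy; have [s2 [Hs2 Hys]] := RD Hy.
  have Hs2RS : forall p, p \in s2 -> RS p.1 p.2 by move=> p Hp; have [] := Hs2 p Hp.
  have Hysplit : y = \sum_(p <- s2 | p.1 == 0) p.2 + \sum_(p <- s2 | p.1 != 0) p.2.
    by rewrite Hys (bigID (fun p => p.1 == 0)).
  have Hy0 : inHc br form h (\sum_(p <- s2 | p.1 == 0) p.2).
    rewrite big_seq_cond; apply: (big_ind (inHc br form h)).
    - exact: ts_0.
    - by move=> ? ? ? ?; apply: ts_add.
    - by move=> p /andP [Hp /eqP Hp0]; have [_ _ H] := Hs2 p Hp; apply: H.
  have HyN : inEhat br form h Q (\sum_(p <- s2 | p.1 != 0) p.2).
    exists (- \sum_(p <- s2 | p.1 == 0) p.2), 0, y; split=> //; [exact: ts_opp | exact: hat0 |].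
    by rewrite addr0 Hysplit addKr.
  have := Hrad _ HyN; rewrite Hsplit !fDl1.
  rewrite (perp0 (tspan_RS0 Ha) Hs2RS) (perp0 HbRS Hs2RS) (perp0 (tspan_RS0 Hc0) Hs2RS) !add0r => HN.
  rewrite Hysplit fDr1 HN addr0 fsym /N.
  exact: (perp0 (tspan_RS0 Hy0) HsRS).
have HZ := rad_central HNEc HNperp.
have HN0 : N = 0.
  have H0N := (H0iff N).2 (HC N HZ).
  have [Psub Pscale Pbr] := P_zero.
  apply/eqP; rewrite -oppr_eq0; apply/eqP.
  apply: (PL_inner Psub Pscale Pbr (s := filter (fun p => p.1 != 0) s) (a0 := 0)).
  - by move=> p; rewrite mem_filter => /andP [Hp0 Hp]; split=> //; apply: HsRS.
  - exact: RS_opp.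
  - by rewrite big_filter -/N addNr.
rewrite Hsplit HN0 addr0 addrAC in Hrad *.
apply: radH; first exact: ts_add.
- exact: Hb.
- move=> t' Ht'; apply: Hrad; exists t', 0, 0; split=> //; [exact: hat0 | exact: Ec_zero |].
  by rewrite !addr0.
- move=> b' Hb'; apply: Hrad; exists 0, b', 0; split=> //; [exact: ts_0 | exact: Ec_zero |].
  by rewrite add0r addr0.
Qed.

End Dot.
End A.


Unset Implicit Arguments.

Theorem lemma4p8 (R : realType) (E : lmodType R[i]) (br : E -> E -> E)
    (form : E -> E -> R[i]) (n : nat) (h : 'I_n -> E)
    (Rd : seq 'rV[R[i]]_n) (m : nat) (Q : 'M[R[i]]_(m, n)) :
  is_EALA br form h ->
  is_dotR br form h Rd ->
  is_hatH0 br form h Rd Q ->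
  [/\ nondeg_on form (inEhat br form h Q) <-> nondeg_on form (inEiso br form h),
      nondeg_on form (inEiso br form h) <->
        (forall x, inZEc br form h x -> inH h x) &
      (forall x, inZEc br form h x -> inH h x) <->
        nondeg_on form (inEhat br form h Q)].
Proof.
move=> HE HD HQ.
have AC := @AtoC R E br form n h HE m Q.
have BC := @BtoC R E br form n h HE.
have CB := @CtoB R E br form n h HE.
have CA := @CtoA R E br form n h HE Rd m Q HD HQ.
split; split.
- by move=> HA; apply: CB; apply: AC.
- by move=> HB; apply: CA; apply: BC.
- exact: BC.
- exact: CB.
- exact: CA.
- exact: AC.
Qed.
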